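(* Let $B=\mathbf I\boxtimes\mathrm{Dec}_\bot\mathbf C$, so $B_{i,j}$ is the groupoid of pairs $(a:S\to\underline i,\ b:P\to\underline{j+1})$ of a layered finite set and a layered finite poset. Then $B$ has an augmented abacus map whose components $f_{i,j}:B_{i+1,j}\to B_{i,j+1}$ ($i,j\ge0$) move the last layer of the set into a new first layer of the poset: $f_{i,j}(a:S\to\underline{i+1},\ b:P\to\underline{j+1})=\big(a|:a^{-1}(\underline i)\to\underline i,\ b':a^{-1}(i+1)\sqcup P\to\underline{j+2}\big)$, where $a^{-1}(i+1)$ is discretely ordered and incomparable with $P$, $b'$ sends $a^{-1}(i+1)$ to $1$ and $x\in P$ to $b(x)+1$.
   Context: For $n\ge0$, $\underline n=\{1,\dots,n\}$. $\mathbf C_n$ is the groupoid of $n$-layered finite posets (monotone maps $P\to\underline n$, morphisms poset isomorphisms over $\underline n$), $\mathbf I_n$ the groupoid of $n$-layered finite sets (maps $S\to\underline n$); both are simplicial groupoids with inner face maps joining adjacent layers, $d_0$/$d_n$ deleting the first/last layer, degeneracies inserting empty layers; they are decomposition spaces. $\mathrm{Dec}_\bot Z$ has $(\mathrm{Dec}_\bot Z)_n=Z_{n+1}$ with maps $d_{k+1},s_{k+1}$. The box product $B=X\boxtimes\mathrm{Dec}_\bot Y$ ($X=\mathbf I$, $Y=\mathbf C$) has $B_{i,j}=X_i\times Y_{j+1}$, horizontal maps $d_k=\mathrm{id}\times d_{k+1}$, $s_k=\mathrm{id}\times s_{k+1}$, vertical maps $e_k\times\mathrm{id}$, $t_k\times\mathrm{id}$,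 augmentations $B_{i,-1}=X_i\times Y_0$, $B_{-1,j}=X_0\times Y_j$, $u=\mathrm{id}\times d_1$, $v=\mathrm{id}\times d_0$. An abacus map is a family $f_{i,j}:B_{i+1,j}\to B_{i,j+1}$ such that each $f_{i,\bullet}:B_{i+1,\bullet}\to\mathrm{Dec}_\bot(B_{i,\bullet})$ is simplicial, each $f_{\bullet,j}:\mathrm{Dec}_\top(B_{\bullet,j})\to B_{\bullet,j+1}$ commutes with all structure maps except top face maps ($\mathrm{Dec}_\top$ shifts down by one and deletes the last face/degeneracy maps), and $d_0f_{i,j}t_i=\mathrm{id}$ ($t_i$ the top vertical degeneracy). It is augmented if there exist maps $f_{i,-1}:B_{i+1,-1}\to B_{i,0}$ with $f_{i,-1}u=d_1f_{i,0}$ and $uf_{i,-1}=e_{i+1}$, and maps $f_{-1,j}:B_{0,j}\to B_{-1,j+1}$ with $f_{-1,j}e_0=vf_{0,j}$ and $d_0f_{-1,j}=v$. *)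

(* Defs.v *)
From HB Require Import structures.
From mathcomp Require Import all_boot zify.
Set Implicit Arguments. Unset Strict Implicit. Unset Printing Implicit Defensive.

(* Layers of an n-layered object: 'I_n, i.e. 0-based (layer k+1 of the paper
   is the ordinal k). *)

Record lset (n : nat) := LSet { ls_car : finType; ls_lay : ls_car -> 'I_n }.

Record lposet (n : nat) := LPoset {
  lp_car : finType;
  lp_le : rel lp_car;
  lp_refl : reflexive lp_le;
  lp_anti : antisymmetric lp_le;
  lp_trans : transitive lp_le;
  lp_lay : lp_car -> 'I_n;
  lp_mono : forall x y, lp_le x y -> lp_lay x <= lp_lay y }.
Arguments ls_lay {n} l _.
Arguments lp_le {n} l _ _.
Arguments lp_lay {n} l _.

Record lsiso n (A B : lset n) := LSIso {
  si_f : ls_car A -> ls_car B;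
  si_g : ls_car B -> ls_car A;
  si_fK : cancel si_f si_g;
  si_gK : cancel si_g si_f;
  si_lay : forall x, ls_lay B (si_f x) = ls_lay A x }.

Record lpiso n (P Q : lposet n) := LPIso {
  pi_f : lp_car P -> lp_car Q;
  pi_g : lp_car Q -> lp_car P;
  pi_fK : cancel pi_f pi_g;
  pi_gK : cancel pi_g pi_f;
  pi_le : forall x y, lp_le Q (pi_f x) (pi_f y) = lp_le P x y;
  pi_lay : forall x, lp_lay Q (pi_f x) = lp_lay P x }.

Definition lsid n (A : lset n) : lsiso A A :=
  @LSIso n A A id id (fun _ => erefl) (fun _ => erefl) (fun _ => erefl).
Definition lpid n (P : lposet n) : lpiso P P :=
  @LPIso n P P id id (fun _ => erefl) (fun _ => erefl) (fun _ _ => erefl)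
    (fun _ => erefl).

Section Comp.
Variable n : nat.
Lemma lscomp_fK (A B C : lset n) (g : lsiso B C) (h : lsiso A B) :
  cancel (si_f g \o si_f h) (si_g h \o si_g g).
Proof. by move=> x /=; rewrite !si_fK. Qed.
Lemma lscomp_gK (A B C : lset n) (g : lsiso B C) (h : lsiso A B) :
  cancel (si_g h \o si_g g) (si_f g \o si_f h).
Proof. by move=> x /=; rewrite !si_gK. Qed.
Lemma lscomp_lay (A B C : lset n) (g : lsiso B C) (h : lsiso A B) x :
  ls_lay C ((si_f g \o si_f h) x) = ls_lay A x.
Proof. by rewrite /= !si_lay. Qed.
Definition lscomp (A B C : lset n) (g : lsiso B C) (h : lsiso A B) : lsiso A C :=
  LSIso (lscomp_fK g h) (lscomp_gK g h) (lscomp_lay g h).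

Lemma lpcomp_fK (P Q R : lposet n) (g : lpiso Q R) (h : lpiso P Q) :
  cancel (pi_f g \o pi_f h) (pi_g h \o pi_g g).
Proof. by move=> x /=; rewrite !pi_fK. Qed.
Lemma lpcomp_gK (P Q R : lposet n) (g : lpiso Q R) (h : lpiso P Q) :
  cancel (pi_g h \o pi_g g) (pi_f g \o pi_f h).
Proof. by move=> x /=; rewrite !pi_gK. Qed.
Lemma lpcomp_le (P Q R : lposet n) (g : lpiso Q R) (h : lpiso P Q) x y :
  lp_le R ((pi_f g \o pi_f h) x) ((pi_f g \o pi_f h) y) = lp_le P x y.
Proof. by rewrite /= !pi_le. Qed.
Lemma lpcomp_lay (P Q R : lposet n) (g : lpiso Q R) (h : lpiso P Q) x :
  lp_lay R ((pi_f g \o pi_f h) x) = lp_lay P x.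
Proof. by rewrite /= !pi_lay. Qed.
Definition lpcomp (P Q R : lposet n) (g : lpiso Q R) (h : lpiso P Q) : lpiso P R :=
  LPIso (lpcomp_fK g h) (lpcomp_gK g h) (lpcomp_le g h) (lpcomp_lay g h).
End Comp.

Record sfun n m := SFun {
  sf_ob : lset n -> lset m;
  sf_hom : forall A B, lsiso A B -> lsiso (sf_ob A) (sf_ob B) }.
Record pfun n m := PFun {
  pf_ob : lposet n -> lposet m;
  pf_hom : forall P Q, lpiso P Q -> lpiso (pf_ob P) (pf_ob Q) }.

Definition idS n : sfun n n := @SFun n n id (fun _ _ h => h).
Definition idP n : pfun n n := @PFun n n id (fun _ _ h => h).

(* Relayering along a map of layers g : 'I_n -> 'I_m (joining layers,
   inserting empty layers). *)
Definition ls_relay n m (g : 'I_n -> 'I_m) (A : lset n) : lset m :=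
  @LSet m (ls_car A) (fun x => g (ls_lay A x)).
Lemma ls_relay_lay n m (g : 'I_n -> 'I_m) (A B : lset n) (h : lsiso A B) x :
  ls_lay (ls_relay g B) (si_f h x) = ls_lay (ls_relay g A) x.
Proof. by rewrite /= si_lay. Qed.
Definition ls_relayF n m (g : 'I_n -> 'I_m) : sfun n m :=
  @SFun n m (ls_relay g) (fun A B h =>
    @LSIso m (ls_relay g A) (ls_relay g B) (si_f h) (si_g h) (si_fK h) (si_gK h)
      (ls_relay_lay g h)).

Section PRelay.
Variables (n m : nat) (g : 'I_n -> 'I_m).
Hypothesis gmono : forall x y : 'I_n, x <= y -> g x <= g y.
Lemma lp_relay_mono (P : lposet n) x y :
  lp_le P x y -> g (lp_lay P x) <= g (lp_lay P y).
Proof. by move=> /lp_mono; apply: gmono. Qed.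
Definition lp_relay (P : lposet n) : lposet m :=
  @LPoset m (lp_car P) (lp_le P) (@lp_refl n P) (@lp_anti n P) (@lp_trans n P)
    (fun x => g (lp_lay P x)) (@lp_relay_mono P).
Lemma lp_relay_lay (P Q : lposet n) (h : lpiso P Q) x :
  lp_lay (lp_relay Q) (pi_f h x) = lp_lay (lp_relay P) x.
Proof. by rewrite /= pi_lay. Qed.
Definition lp_relayF : pfun n m :=
  @PFun n m lp_relay (fun P Q h =>
    @LPIso m (lp_relay P) (lp_relay Q) (pi_f h) (pi_g h) (pi_fK h) (pi_gK h)
      (pi_le h) (lp_relay_lay h)).
End PRelay.

(* Restriction to the layers lo+1, ..., lo+m (0-based: lo <= layer < lo+m),
   renumbered as 1..m (deleting outer layers). *)
Lemma rng_lt lo m (a : nat) : (lo <= a) && (a < lo + m) -> a - lo < m.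
Proof. by case/andP=> h1 h2; rewrite ltn_subLR. Qed.

Section SRestr.
Variables (n lo m : nat).
Definition ls_rng (A : lset n) : pred (ls_car A) :=
  fun x => (lo <= ls_lay A x) && (ls_lay A x < lo + m).
Arguments ls_rng A x : clear implicits.
Definition ls_restr (A : lset n) : lset m :=
  @LSet m {x : ls_car A | ls_rng A x}
    (fun x => Ordinal (rng_lt (valP x))).
Lemma ls_rng_f (A B : lset n) (h : lsiso A B) x :
  ls_rng A x -> ls_rng B (si_f h x).
Proof. by rewrite /ls_rng si_lay. Qed.
Lemma ls_rng_g (A B : lset n) (h : lsiso A B) y :
  ls_rng B y -> ls_rng A (si_g h y).
Proof. by rewrite /ls_rng -(si_lay h (si_g h y)) si_gK. Qed.
Section Hom.
Variables (A B : lset n) (h : lsiso A B).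
Definition ls_restr_f (x : ls_car (ls_restr A)) : ls_car (ls_restr B) :=
  exist _ (si_f h (val x)) (ls_rng_f h (valP x)).
Definition ls_restr_g (y : ls_car (ls_restr B)) : ls_car (ls_restr A) :=
  exist _ (si_g h (val y)) (ls_rng_g h (valP y)).
Lemma ls_restr_fK : cancel ls_restr_f ls_restr_g.
Proof. by move=> x; apply: val_inj; rewrite /= si_fK. Qed.
Lemma ls_restr_gK : cancel ls_restr_g ls_restr_f.
Proof. by move=> x; apply: val_inj; rewrite /= si_gK. Qed.
Lemma ls_restr_lay x : ls_lay (ls_restr B) (ls_restr_f x) = ls_lay (ls_restr A) x.
Proof. by apply: val_inj; rewrite /= si_lay. Qed.
Definition ls_restr_hom : lsiso (ls_restr A) (ls_restr B) :=
  LSIso ls_restr_fK ls_restr_gK ls_restr_lay.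
End Hom.
Definition ls_restrF : sfun n m := @SFun n m ls_restr ls_restr_hom.
End SRestr.

Section PRestr.
Variables (n lo m : nat).
Definition lp_rng (P : lposet n) : pred (lp_car P) :=
  fun x => (lo <= lp_lay P x) && (lp_lay P x < lo + m).
Arguments lp_rng P x : clear implicits.
Section Obj.
Variable P : lposet n.
Definition lpr_T : finType := {x : lp_car P | lp_rng P x}.
Definition lpr_le : rel lpr_T := fun x y => lp_le P (val x) (val y).
Lemma lpr_refl : reflexive lpr_le.
Proof. by move=> x; apply: lp_refl. Qed.
Lemma lpr_anti : antisymmetric lpr_le.
Proof. by move=> x y h; apply: val_inj; apply: (@lp_anti n P). Qed.
Lemma lpr_trans : transitive lpr_le.
Proof. by move=> x y z; apply: lp_trans. Qed.
Definition lpr_lay (x : lpr_T) : 'I_m := Ordinal (rng_lt (valP x)).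
Lemma lpr_mono x y : lpr_le x y -> lpr_lay x <= lpr_lay y.
Proof. by move=> /lp_mono h; rewrite /= leq_sub2r. Qed.
Definition lp_restr : lposet m :=
  @LPoset m lpr_T lpr_le lpr_refl lpr_anti lpr_trans lpr_lay lpr_mono.
End Obj.
Lemma lp_rng_f (P Q : lposet n) (h : lpiso P Q) x :
  lp_rng P x -> lp_rng Q (pi_f h x).
Proof. by rewrite /lp_rng pi_lay. Qed.
Lemma lp_rng_g (P Q : lposet n) (h : lpiso P Q) y :
  lp_rng Q y -> lp_rng P (pi_g h y).
Proof. by rewrite /lp_rng -(pi_lay h (pi_g h y)) pi_gK. Qed.
Section Hom.
Variables (P Q : lposet n) (h : lpiso P Q).
Definition lp_restr_f (x : lp_car (lp_restr P)) : lp_car (lp_restr Q) :=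
  exist _ (pi_f h (val x)) (lp_rng_f h (valP x)).
Definition lp_restr_g (y : lp_car (lp_restr Q)) : lp_car (lp_restr P) :=
  exist _ (pi_g h (val y)) (lp_rng_g h (valP y)).
Lemma lp_restr_fK : cancel lp_restr_f lp_restr_g.
Proof. by move=> x; apply: val_inj; rewrite /= pi_fK. Qed.
Lemma lp_restr_gK : cancel lp_restr_g lp_restr_f.
Proof. by move=> x; apply: val_inj; rewrite /= pi_gK. Qed.
Lemma lp_restr_le x y :
  lp_le (lp_restr Q) (lp_restr_f x) (lp_restr_f y) = lp_le (lp_restr P) x y.
Proof. by rewrite /= /lpr_le /= pi_le. Qed.
Lemma lp_restr_lay x : lp_lay (lp_restr Q) (lp_restr_f x) = lp_lay (lp_restr P) x.
Proof. by apply: val_inj; rewrite /= pi_lay. Qed.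
Definition lp_restr_hom : lpiso (lp_restr P) (lp_restr Q) :=
  LPIso lp_restr_fK lp_restr_gK lp_restr_le lp_restr_lay.
End Hom.
Definition lp_restrF : pfun n m := @PFun n m lp_restr lp_restr_hom.
End PRestr.

(* Maps of layers.
   joinmap n k : {1..n+2} -> {1..n+1} joins the layers k and k+1 (1-based),
     i.e. 0-based t |-> t if t < k, t-1 otherwise (used for 1 <= k <= n+1;
     the clamp by minn is only there to make the map total and is inactive
     in that range).
   skipmap n k : {1..n} -> {1..n+1} inserts an empty layer at 0-based
     position k (0 <= k <= n). *)
Lemma joinmap_lt n (k t : nat) : minn (if t < k then t else t.-1) n < n.+1.
Proof. exact: leq_ltn_trans (geq_minr _ _) (ltnSn n). Qed.
Definition joinmap n k (t : 'I_n.+2) : 'I_n.+1 := Ordinal (joinmap_lt n k t).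
Arguments joinmap : clear implicits.
Lemma joinmap_mono n k (x y : 'I_n.+2) : x <= y -> joinmap n k x <= joinmap n k y.
Proof.
move=> xy /=; rewrite leq_min geq_minr andbT; apply: leq_trans (geq_minl _ _) _.
rewrite -!subn1; case: ifP => hx; case: ifP => hy; lia.
Qed.
Lemma skipmap_lt n (k : nat) (t : 'I_n) : (if t < k then (t : nat) else t.+1) < n.+1.
Proof. by case: ifP => _; [apply: ltnW | ]; rewrite ltnS ?ltn_ord // ltnW. Qed.
Definition skipmap n k (t : 'I_n) : 'I_n.+1 := Ordinal (skipmap_lt k t).
Arguments skipmap : clear implicits.
Lemma skipmap_mono n k (x y : 'I_n) : x <= y -> skipmap n k x <= skipmap n k y.
Proof.
move=> xy /=; case: ifP => hx; case: ifP => hy; lia.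
Qed.

(* Xface n k = d_k : I_{n+1} -> I_n (0 <= k <= n+1):
     d_0 deletes the first layer, d_{n+1} deletes the last layer,
     inner d_k (1 <= k <= n) joins the layers k and k+1.
   Xdeg n k = s_k : I_n -> I_{n+1} (0 <= k <= n) inserts an empty layer
     (as layer k+1).  Same for C (Yface, Ydeg). *)
Definition Xface (n k : nat) : sfun n.+1 n :=
  match n return sfun n.+1 n with
  | 0 => if k == 0 then ls_restrF 1 1 0 else ls_restrF 1 0 0
  | n'.+1 =>
      if k == 0 then ls_restrF n'.+2 1 n'.+1
      else if k == n'.+2 then ls_restrF n'.+2 0 n'.+1
      else ls_relayF (joinmap n' k)
  end.
Definition Xdeg (n k : nat) : sfun n n.+1 := ls_relayF (skipmap n k).

Definition Yface (n k : nat) : pfun n.+1 n :=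
  match n return pfun n.+1 n with
  | 0 => if k == 0 then lp_restrF 1 1 0 else lp_restrF 1 0 0
  | n'.+1 =>
      if k == 0 then lp_restrF n'.+2 1 n'.+1
      else if k == n'.+2 then lp_restrF n'.+2 0 n'.+1
      else lp_relayF (@joinmap_mono n' k)
  end.
Definition Ydeg (n k : nat) : pfun n n.+1 := lp_relayF (@skipmap_mono n k).

(* The groupoids I_i x C_n, with B_{i,j} = bobj i (j+1),
   B_{i,-1} = bobj i 0, B_{-1,j} = bobj 0 j. *)
Definition bobj (i n : nat) := (lset i * lposet n)%type.
Definition bhom i n (x y : bobj i n) := (lsiso x.1 y.1 * lpiso x.2 y.2)%type.
Definition bid i n (x : bobj i n) : bhom x x := (lsid x.1, lpid x.2).
Definition bcomp i n (x y z : bobj i n) (g : bhom y z) (h : bhom x y) : bhom x z :=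
  (lscomp g.1 h.1, lpcomp g.2 h.2).
(* equality of morphisms (isomorphisms are determined by their underlying
   bijections) *)
Definition bheq i n (x y : bobj i n) (h h' : bhom x y) : Prop :=
  (forall s, si_f h.1 s = si_f h'.1 s) /\ (forall p, pi_f h.2 p = pi_f h'.2 p).

Record bfun i n i' n' := BFun {
  bf_ob :> bobj i n -> bobj i' n';
  bf_hom : forall x y : bobj i n, bhom x y -> bhom (bf_ob x) (bf_ob y) }.
Arguments bf_hom {i n i' n'} _ {x y} _.

Definition is_functor i n i' n' (F : bfun i n i' n') : Prop :=
  [/\ (forall x, bheq (bf_hom F (bid x)) (bid (F x))),
      (forall x y z (g : bhom y z) (h : bhom x y),
        bheq (bf_hom F (bcomp g h)) (bcomp (bf_hom F g) (bf_hom F h))) &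
      (forall x y (h h' : bhom x y), bheq h h' -> bheq (bf_hom F h) (bf_hom F h'))].

Definition bidF i n : bfun i n i n := @BFun i n i n id (fun _ _ h => h).
Definition bcompF i n i' n' i'' n'' (G : bfun i' n' i'' n'') (F : bfun i n i' n')
  : bfun i n i'' n'' :=
  @BFun i n i'' n'' (fun x => G (F x)) (fun x y h => bf_hom G (bf_hom F h)).
Definition prodF i n i' n' (F : sfun i i') (G : pfun n n') : bfun i n i' n' :=
  @BFun i n i' n' (fun x => (sf_ob F x.1, pf_ob G x.2))
    (fun x y h => (sf_hom F h.1, pf_hom G h.2)).

(* F = G as maps of groupoids, read as: F and G are naturally isomorphic *)
Definition natiso i n i' n' (F G : bfun i n i' n') : Prop :=
  exists eta : forall x, bhom (F x) (G x),
    forall x y (h : bhom x y),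
      bheq (bcomp (bf_hom G h) (eta x)) (bcomp (eta y) (bf_hom F h)).

(* horizontal d_k : B_{i,j+1} -> B_{i,j}   (= id x d_{k+1}),  0 <= k <= j+1 *)
Definition Bhf i j k : bfun i j.+2 i j.+1 := prodF (idS i) (Yface j.+1 k.+1).
(* horizontal s_k : B_{i,j} -> B_{i,j+1}   (= id x s_{k+1}),  0 <= k <= j *)
Definition Bhs i j k : bfun i j.+1 i j.+2 := prodF (idS i) (Ydeg j.+1 k.+1).
(* vertical e_k : B_{i+1,j} -> B_{i,j}     (= d_k x id),      0 <= k <= i+1 *)
Definition Bvf i j k : bfun i.+1 j.+1 i j.+1 := prodF (Xface i k) (idP j.+1).
(* vertical t_k : B_{i,j} -> B_{i+1,j}     (= s_k x id),      0 <= k <= i *)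
Definition Bvs i j k : bfun i j.+1 i.+1 j.+1 := prodF (Xdeg i k) (idP j.+1).
(* augmentation u = id x d_1 : B_{i,0} -> B_{i,-1} *)
Definition Bu i : bfun i 1 i 0 := prodF (idS i) (Yface 0 1).
(* augmentation v = id x d_0 : B_{0,j} -> B_{-1,j} *)
Definition Bv j : bfun 0 j.+1 0 j := prodF (idS 0) (Yface j 0).
(* vertical face e_k on the augmentation row: B_{i+1,-1} -> B_{i,-1} *)
Definition Bvf_aug i k : bfun i.+1 0 i 0 := prodF (Xface i k) (idP 0).
(* horizontal face d_k on the augmentation column B_{-1,.} = X_0 x Y:
   B_{-1,j+1} -> B_{-1,j} *)
Definition Bhf_aug j k : bfun 0 j.+1 0 j := prodF (idS 0) (Yface j k).

Section Abacus.
Variables (i j : nat).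

(* the moved layer a^{-1}(i+1) (0-based layer i) *)
Definition toplayer (A : lset i.+1) : pred (ls_car A) :=
  fun s => (ls_lay A s : nat) == i.
Arguments toplayer A s : clear implicits.

Section Obj.
Variables (A : lset i.+1) (P : lposet j.+1).
Definition mv_T : finType := ({s : ls_car A | toplayer A s} + lp_car P)%type.
Definition mv_le : rel mv_T := fun x y =>
  match x, y with
  | inl a, inl b => a == b
  | inr p, inr q => lp_le P p q
  | _, _ => false
  end.
Lemma mv_refl : reflexive mv_le.
Proof. by case=> [a|p] /=; rewrite ?eqxx ?lp_refl. Qed.
Lemma mv_anti : antisymmetric mv_le.
Proof.
case=> [a|p] [b|q] //=; first by case/andP=> /eqP->.
by move=> h; rewrite (@lp_anti _ P p q h).
Qed.
Lemma mv_trans : transitive mv_le.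
Proof.
case=> [a|p] [b|q] [c|r] //=; first by move=> /eqP-> /eqP->.
exact: lp_trans.
Qed.
Definition mv_lay (x : mv_T) : 'I_j.+2 :=
  match x with inl _ => ord0 | inr p => lift ord0 (lp_lay P p) end.
Lemma mv_mono x y : mv_le x y -> mv_lay x <= mv_lay y.
Proof. by case: x y => [a|p] [b|q] //= /lp_mono. Qed.
Definition mv_poset : lposet j.+2 :=
  @LPoset j.+2 mv_T mv_le mv_refl mv_anti mv_trans mv_lay mv_mono.
End Obj.

Section Hom.
Variables (A B : lset i.+1) (P Q : lposet j.+1) (h1 : lsiso A B) (h2 : lpiso P Q).
Lemma top_f s : toplayer A s -> toplayer B (si_f h1 s).
Proof. by rewrite /toplayer si_lay. Qed.
Lemma top_g s : toplayer B s -> toplayer A (si_g h1 s).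
Proof. by rewrite /toplayer -(si_lay h1 (si_g h1 s)) si_gK. Qed.
Definition mv_f (x : mv_T A P) : mv_T B Q :=
  match x with
  | inl a => inl (exist _ (si_f h1 (val a)) (top_f (valP a)))
  | inr p => inr (pi_f h2 p)
  end.
Definition mv_g (x : mv_T B Q) : mv_T A P :=
  match x with
  | inl a => inl (exist _ (si_g h1 (val a)) (top_g (valP a)))
  | inr p => inr (pi_g h2 p)
  end.
Lemma mv_fK : cancel mv_f mv_g.
Proof.
by case=> [a|p] /=; [congr inl; apply: val_inj; rewrite /= si_fK | rewrite pi_fK].
Qed.
Lemma mv_gK : cancel mv_g mv_f.
Proof.
by case=> [a|p] /=; [congr inl; apply: val_inj; rewrite /= si_gK | rewrite pi_gK].
Qed.
Lemma mv_f_le x y : lp_le (mv_poset B Q) (mv_f x) (mv_f y) = lp_le (mv_poset A P) x y.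
Proof.
case: x y => [a|p] [b|q] //=; last exact: pi_le.
apply/eqP/eqP => [[]|-> //]; move/(can_inj (si_fK h1)) => e.
by apply: val_inj.
Qed.
Lemma mv_f_lay x : lp_lay (mv_poset B Q) (mv_f x) = lp_lay (mv_poset A P) x.
Proof. by case: x => [a|p] //=; rewrite pi_lay. Qed.
Definition mv_hom : lpiso (mv_poset A P) (mv_poset B Q) :=
  @LPIso j.+2 (mv_poset A P) (mv_poset B Q) mv_f mv_g mv_fK mv_gK mv_f_le mv_f_lay.
End Hom.

Definition abacus_f : bfun i.+1 j.+1 i j.+2 :=
  @BFun i.+1 j.+1 i j.+2
    (fun x => (@ls_restr i.+1 0 i x.1, mv_poset x.1 x.2))
    (fun x y h => (ls_restr_hom 0 i h.1, mv_hom h.1 h.2)).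
End Abacus.

Definition is_abacus_map (f : forall i j, bfun i.+1 j.+1 i j.+2) : Prop :=
  [/\
      (forall i j, is_functor (f i j)),
      (* f_{i,.} : B_{i+1,.} -> Dec_bot(B_{i,.}) is simplicial *)
      (forall i j k, k <= j.+1 ->
         natiso (bcompF (Bhf i j.+1 k.+1) (f i j.+1))
                (bcompF (f i j) (Bhf i.+1 j k))) /\
      (forall i j k, k <= j ->
         natiso (bcompF (Bhs i j.+1 k.+1) (f i j))
                (bcompF (f i j.+1) (Bhs i.+1 j k))),
      (* f_{.,j} : Dec_top(B_{.,j}) -> B_{.,j+1} commutes with all structure
         maps except the top face maps *)
      (forall i j k, k <= i ->
         natiso (bcompF (Bvf i j.+1 k) (f i.+1 j))
                (bcompF (f i j) (Bvf i.+1 j k))) /\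
      (forall i j k, k <= i ->
         natiso (bcompF (Bvs i j.+1 k) (f i j))
                (bcompF (f i.+1 j) (Bvs i.+1 j k))) &
      (forall i j, natiso (bcompF (Bhf i j 0) (bcompF (f i j) (Bvs i j i)))
                          (bidF i j.+1))].

Definition is_augmented_abacus_map (f : forall i j, bfun i.+1 j.+1 i j.+2) : Prop :=
  is_abacus_map f /\
  exists (fa : forall i, bfun i.+1 0 i 1) (fb : forall j, bfun 0 j.+1 0 j.+1),
    [/\ (* f_{i,-1} : B_{i+1,-1} -> B_{i,0} and f_{-1,j} : B_{0,j} -> B_{-1,j+1}
           are maps of groupoids *)
        (forall i, is_functor (fa i)) /\ (forall j, is_functor (fb j)),
        (forall i, natiso (bcompF (fa i) (Bu i.+1)) (bcompF (Bhf i 0 1) (f i 0))),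
        (forall i, natiso (bcompF (Bu i) (fa i)) (Bvf_aug i i.+1)),
        (forall j, natiso (bcompF (fb j) (Bvf 0 j 0)) (bcompF (Bv j.+1) (f 0 j))) &
        (forall j, natiso (bcompF (Bhf_aug j 0) (fb j)) (Bv j))].

(* Main.v *)
Require Import Defs.
From HB Require Import structures.
From mathcomp Require Import all_boot zify.
Set Implicit Arguments. Unset Strict Implicit. Unset Printing Implicit Defensive.

Lemma abacus_functor i j : is_functor (abacus_f i j).
Proof.
split.
- move=> [A P]; split => [s|[a|p]] //=; first by apply: val_inj.
  by congr inl; apply: val_inj.
- move=> x y z g h; split => [s|[a|p]] //=; first by apply: val_inj.
  by congr inl; apply: val_inj.
- move=> x y h h' [H1 H2]; split => [s|[a|p]] /=; first by apply: val_inj; rewrite /= H1.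
  + by congr inl; apply: val_inj; rewrite /= H1.
  + by rewrite H2.
Qed.

Section C2b.
Variables (i j k : nat).
Variables (A : lset i.+1) (P : lposet j.+1).
Definition F2b := lp_relay (@skipmap_mono j.+2 k.+2) (mv_poset A P).
Definition G2b := mv_poset A (lp_relay (@skipmap_mono j.+1 k.+1) P).
Lemma e2b_lay (x : lp_car F2b) : lp_lay G2b x = lp_lay F2b x.
Proof. by apply: val_inj; case: x => [a|p] //=; rewrite /bump /= ?add1n; case: ifP; case: ifP => //=; lia. Qed.
Definition e2b : lpiso F2b G2b :=
  @LPIso _ F2b G2b id id (fun _ => erefl) (fun _ => erefl) (fun _ _ => erefl) e2b_lay.
End C2b.

Lemma cond2b i j k : k <= j ->
         natiso (bcompF (Bhs i j.+1 k.+1) (abacus_f i j))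
                (bcompF (abacus_f i j.+1) (Bhs i.+1 j k)).
Proof.
move=> hk; exists (fun x => (lsid _, @e2b i j k x.1 x.2)).
by move=> x y h; split => [s|[a|p]].
Qed.

Lemma Yface_mid n k : 0 < k -> k <= n.+1 -> Yface n.+1 k = lp_relayF (@joinmap_mono n k).
Proof. by case: k => // k _ hk; rewrite /= ifN //; apply/eqP; lia. Qed.
Lemma Yface_last n : Yface n.+1 n.+2 = lp_restrF n.+2 0 n.+1.
Proof. by rewrite /= eqxx. Qed.

Section C2a.
Variables (i j k : nat).
Variables (A : lset i.+1) (P : lposet j.+2).
Definition F2a := lp_relay (@joinmap_mono j.+1 k.+2) (mv_poset A P).
Definition G2a := mv_poset A (lp_relay (@joinmap_mono j k.+1) P).
Lemma e2a_lay (x : lp_car F2a) : lp_lay G2a x = lp_lay F2a x.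
Proof.
apply: val_inj; case: x => [a|p] //=; rewrite /bump /= ?add1n.
have := ltn_ord (lp_lay P p); case: ifP; case: ifP => //=; lia.
Qed.
Definition e2a : lpiso F2a G2a :=
  @LPIso _ F2a G2a id id (fun _ => erefl) (fun _ => erefl) (fun _ _ => erefl) e2a_lay.

Definition F2l := lp_restr 0 j.+2 (mv_poset A P).
Definition G2l := mv_poset A (lp_restr 0 j.+1 P).
Lemma rng2l p : @lp_rng _ 0 j.+2 (mv_poset A P) (inr p) -> @lp_rng _ 0 j.+1 P p.
Proof. by rewrite /lp_rng /= /bump /=; lia. Qed.
Lemma rng2l' p : @lp_rng _ 0 j.+1 P p -> @lp_rng _ 0 j.+2 (mv_poset A P) (inr p).
Proof. by rewrite /lp_rng /= /bump /=; lia. Qed.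
Lemma rng2la a : @lp_rng _ 0 j.+2 (mv_poset A P) (inl a).
Proof. by []. Qed.
Definition f2l (x : lp_car F2l) : lp_car G2l :=
  let: exist v H := x in
  (match v return @lp_rng _ 0 j.+2 (mv_poset A P) v -> lp_car G2l with
   | inl a => fun _ => inl a
   | inr p => fun H => inr (exist _ p (rng2l H)) end) H.
Definition g2l (x : lp_car G2l) : lp_car F2l :=
  match x with
  | inl a => exist _ (inl a) (rng2la a)
  | inr q => exist _ (inr (val q)) (rng2l' (valP q)) end.
Lemma f2lK : cancel f2l g2l.
Proof. by case=> [[a|p] H] /=; apply: val_inj. Qed.
Lemma g2lK : cancel g2l f2l.
Proof. by case=> [a|[p H]] //=; congr inr; apply: val_inj. Qed.
Lemma f2l_le x y : lp_le G2l (f2l x) (f2l y) = lp_le F2l x y.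
Proof. by case: x y => [[a|p] H] [[b|q] H']. Qed.
Lemma f2l_lay x : lp_lay G2l (f2l x) = lp_lay F2l x.
Proof. by apply: val_inj; case: x => [[a|p] H] //=; rewrite /bump /= !subn0. Qed.
Definition e2l : lpiso F2l G2l := LPIso f2lK g2lK f2l_le f2l_lay.
End C2a.

Lemma cond2a i j k : k <= j.+1 ->
         natiso (bcompF (Bhf i j.+1 k.+1) (abacus_f i j.+1))
                (bcompF (abacus_f i j) (Bhf i.+1 j k)).
Proof.
rewrite leq_eqVlt; case/orP => [/eqP->|hk].
  rewrite /Bhf Yface_last Yface_last.
  exists (fun x => (lsid _, @e2l i j x.1 x.2)).
  move=> x y h; split => [s|[[a|p] H]] //=.
  by congr inr; apply: val_inj.
rewrite /Bhf (@Yface_mid j.+1 k.+2) // (@Yface_mid j k.+1) //.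
exists (fun x => (lsid _, @e2a i j k x.1 x.2)).
by move=> x y h; split => [s|[a|p]].
Qed.

Section MvIso.
Variables (i i' j : nat) (A : lset i.+1) (B : lset i'.+1) (P : lposet j.+1).
Variables (tf : {s : ls_car A | toplayer s} -> {s : ls_car B | toplayer s})
          (tg : {s : ls_car B | toplayer s} -> {s : ls_car A | toplayer s}).
Hypotheses (tfK : cancel tf tg) (tgK : cancel tg tf).
Definition mvi_f (x : mv_T A P) : mv_T B P :=
  match x with inl a => inl (tf a) | inr p => inr p end.
Definition mvi_g (x : mv_T B P) : mv_T A P :=
  match x with inl a => inl (tg a) | inr p => inr p end.
Lemma mvi_fK : cancel mvi_f mvi_g.
Proof. by case=> [a|p] //=; rewrite tfK. Qed.
Lemma mvi_gK : cancel mvi_g mvi_f.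
Proof. by case=> [a|p] //=; rewrite tgK. Qed.
Lemma mvi_le x y : lp_le (mv_poset B P) (mvi_f x) (mvi_f y) = lp_le (mv_poset A P) x y.
Proof. by case: x y => [a|p] [b|q] //=; rewrite (can_eq tfK). Qed.
Lemma mvi_lay x : lp_lay (mv_poset B P) (mvi_f x) = lp_lay (mv_poset A P) x.
Proof. by case: x. Qed.
Definition mv_iso : lpiso (mv_poset A P) (mv_poset B P) :=
  @LPIso _ (mv_poset A P) (mv_poset B P) mvi_f mvi_g mvi_fK mvi_gK mvi_le mvi_lay.
End MvIso.

Lemma Xface_0 n : Xface n 0 = ls_restrF n.+1 1 n.
Proof. by case: n. Qed.
Lemma Xface_mid n k : 0 < k -> k <= n.+1 -> Xface n.+1 k = ls_relayF (joinmap n k).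
Proof. by case: k => // k _ hk; rewrite /= ifN //; apply/eqP; lia. Qed.

Section C3a0.
Variables (i : nat) (A : lset i.+2).
Definition SL := ls_restr 1 i (ls_restr 0 i.+1 A).
Definition SR := ls_restr 0 i (ls_restr 1 i.+1 A).
Lemma s3_1 a (H1 : ls_rng 0 i.+1 a) (H2 : ls_rng 1 i (exist _ a H1 : ls_car (ls_restr 0 i.+1 A))) :
  ls_rng 1 i.+1 a.
Proof. by move: H1 H2; rewrite /ls_rng /=; lia. Qed.
Lemma s3_2 a (H1 : ls_rng 0 i.+1 a) (H2 : ls_rng 1 i (exist _ a H1 : ls_car (ls_restr 0 i.+1 A))) H :
  ls_rng 0 i (exist _ a H : ls_car (ls_restr 1 i.+1 A)).
Proof. by move: H1 H2; rewrite /ls_rng /=; lia. Qed.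
Lemma s3_3 a (H1 : ls_rng 1 i.+1 a) (H2 : ls_rng 0 i (exist _ a H1 : ls_car (ls_restr 1 i.+1 A))) :
  ls_rng 0 i.+1 a.
Proof. by move: H1 H2; rewrite /ls_rng /=; lia. Qed.
Lemma s3_4 a (H1 : ls_rng 1 i.+1 a) (H2 : ls_rng 0 i (exist _ a H1 : ls_car (ls_restr 1 i.+1 A))) H :
  ls_rng 1 i (exist _ a H : ls_car (ls_restr 0 i.+1 A)).
Proof. by move: H1 H2; rewrite /ls_rng /=; lia. Qed.
Definition s3f (x : ls_car SL) : ls_car SR :=
  let: exist (exist a H1) H2 := x in
  exist _ (exist _ a (s3_1 H2)) (s3_2 H2 (s3_1 H2)).
Definition s3g (x : ls_car SR) : ls_car SL :=
  let: exist (exist a H1) H2 := x in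
  exist _ (exist _ a (s3_3 H2)) (s3_4 H2 (s3_3 H2)).
Lemma s3fK : cancel s3f s3g.
Proof. by case=> [[a H1] H2]; do 2 apply: val_inj. Qed.
Lemma s3gK : cancel s3g s3f.
Proof. by case=> [[a H1] H2]; do 2 apply: val_inj. Qed.
Lemma s3_lay x : ls_lay SR (s3f x) = ls_lay SL x.
Proof. by case: x => [[a H1] H2]; apply: val_inj => /=; lia. Qed.
Definition s3iso : lsiso SL SR := LSIso s3fK s3gK s3_lay.
End C3a0.

Section T3a0.
Variables (i : nat) (A : lset i.+2).
Lemma t3_1 a : toplayer (i:=i.+1) (A:=A) a -> ls_rng 1 i.+1 a.
Proof. by rewrite /toplayer /ls_rng; move/eqP=> ->; rewrite /= leqnn. Qed.
Lemma t3_2 a H : toplayer (i:=i.+1) (A:=A) a ->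
  toplayer (i:=i) (A:=ls_restr 1 i.+1 A) (exist _ a H).
Proof. by rewrite /toplayer /=; lia. Qed.
Lemma t3_3 a H : toplayer (i:=i) (A:=ls_restr 1 i.+1 A) (exist _ a H) ->
  toplayer (i:=i.+1) (A:=A) a.
Proof. by move: H; rewrite /toplayer /ls_rng /=; lia. Qed.
Definition t3f (x : {s : ls_car A | toplayer (i:=i.+1) s}) :
   {s : ls_car (ls_restr 1 i.+1 A) | toplayer (i:=i) s} :=
  let: exist a H := x in exist _ (exist _ a (t3_1 H)) (t3_2 (t3_1 H) H).
Definition t3g (x : {s : ls_car (ls_restr 1 i.+1 A) | toplayer (i:=i) s}) :
   {s : ls_car A | toplayer (i:=i.+1) s} :=
  let: exist (exist a H1) H2 := x in exist _ a (t3_3 H2).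
Lemma t3fK : cancel t3f t3g.
Proof. by case=> [a H]; apply: val_inj. Qed.
Lemma t3gK : cancel t3g t3f.
Proof. by case=> [[a H1] H2]; do 2 apply: val_inj. Qed.
End T3a0.

Lemma cond3a0 i j :
         natiso (bcompF (Bvf i j.+1 0) (abacus_f i.+1 j))
                (bcompF (abacus_f i j) (Bvf i.+1 j 0)).
Proof.
rewrite /Bvf !Xface_0.
exists (fun x => (s3iso x.1, mv_iso x.2 (@t3fK i x.1) (@t3gK i x.1))).
move=> x y h; split => [[[a H1] H2]|[[a H]|p]] //=.
  by do 2 apply: val_inj.
by congr inl; do 2 apply: val_inj.
Qed.

Ltac arith := rewrite /=; repeat (case: ifP => /= ?); lia.

Section C3ak.
Variables (i k : nat) (hk0 : 0 < k) (hk : k <= i.+1) (A : lset i.+3).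
Definition SL3 := ls_relay (joinmap i k) (ls_restr 0 i.+2 A).
Definition SR3 := ls_restr 0 i.+1 (ls_relay (joinmap i.+1 k) A).
Lemma r3_1 (a : ls_car A) : ls_rng 0 i.+2 (A:=A) a -> ls_rng 0 i.+1 (A:=ls_relay (joinmap i.+1 k) A) a.
Proof. rewrite /ls_rng; have := ltn_ord (ls_lay A a); arith. Qed.
Lemma r3_2 (a : ls_car A) : ls_rng 0 i.+1 (A:=ls_relay (joinmap i.+1 k) A) a -> ls_rng 0 i.+2 (A:=A) a.
Proof. rewrite /ls_rng; have := ltn_ord (ls_lay A a); arith. Qed.
Definition r3f (x : ls_car SL3) : ls_car SR3 := let: exist a H := x in exist _ a (r3_1 H).
Definition r3g (x : ls_car SR3) : ls_car SL3 := let: exist a H := x in exist _ a (r3_2 H).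
Lemma r3fK : cancel r3f r3g.
Proof. by case=> a H; apply: val_inj. Qed.
Lemma r3gK : cancel r3g r3f.
Proof. by case=> a H; apply: val_inj. Qed.
Lemma r3_lay x : ls_lay SR3 (r3f x) = ls_lay SL3 x.
Proof. case: x => a H; apply: val_inj; move: H; rewrite /ls_rng; have := ltn_ord (ls_lay A a); arith. Qed.
Definition r3iso : lsiso SL3 SR3 := LSIso r3fK r3gK r3_lay.

Lemma u3_1 a : toplayer (i:=i.+2) (A:=A) a -> toplayer (i:=i.+1) (A:=ls_relay (joinmap i.+1 k) A) a.
Proof. rewrite /toplayer; have := ltn_ord (ls_lay A a); arith. Qed.
Lemma u3_2 a : toplayer (i:=i.+1) (A:=ls_relay (joinmap i.+1 k) A) a -> toplayer (i:=i.+2) (A:=A) a.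
Proof. rewrite /toplayer; have := ltn_ord (ls_lay A a); arith. Qed.
Definition u3f (x : {s : ls_car A | toplayer (i:=i.+2) s}) :
  {s : ls_car (ls_relay (joinmap i.+1 k) A) | toplayer (i:=i.+1) s} :=
  let: exist a H := x in exist _ a (u3_1 H).
Definition u3g (x : {s : ls_car (ls_relay (joinmap i.+1 k) A) | toplayer (i:=i.+1) s}) :
  {s : ls_car A | toplayer (i:=i.+2) s} :=
  let: exist a H := x in exist _ a (u3_2 H).
Lemma u3fK : cancel u3f u3g.
Proof. by case=> a H; apply: val_inj. Qed.
Lemma u3gK : cancel u3g u3f.
Proof. by case=> a H; apply: val_inj. Qed.
End C3ak.

Lemma cond3ak i j k : 0 < k -> k <= i.+1 ->
         natiso (bcompF (Bvf i.+1 j.+1 k) (abacus_f i.+2 j))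
                (bcompF (abacus_f i.+1 j) (Bvf i.+2 j k)).
Proof.
move=> hk0 hk.
rewrite /Bvf (@Xface_mid i k) // (@Xface_mid i.+1 k) //; last by lia.
exists (fun x => (r3iso hk0 hk x.1, mv_iso x.2 (@u3fK _ _ hk0 hk x.1) (@u3gK _ _ hk0 hk x.1))).
move=> x y h; split => [[a H]|[[a H]|p]] //=.
  by apply: val_inj.
by congr inl; apply: val_inj.
Qed.

Lemma cond3a i j k : k <= i ->
         natiso (bcompF (Bvf i j.+1 k) (abacus_f i.+1 j))
                (bcompF (abacus_f i j) (Bvf i.+1 j k)).
Proof.
case: k => [_|k]; first exact: cond3a0.
case: i => // i hk; exact: cond3ak.
Qed.

Section C3b.
Variables (i k : nat) (hk : k <= i) (A : lset i.+1).
Definition SL3b := ls_relay (skipmap i k) (ls_restr 0 i A).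
Definition SR3b := ls_restr 0 i.+1 (ls_relay (skipmap i.+1 k) A).
Lemma r3b_1 (a : ls_car A) : ls_rng 0 i (A:=A) a -> ls_rng 0 i.+1 (A:=ls_relay (skipmap i.+1 k) A) a.
Proof. rewrite /ls_rng; have := ltn_ord (ls_lay A a); arith. Qed.
Lemma r3b_2 (a : ls_car A) : ls_rng 0 i.+1 (A:=ls_relay (skipmap i.+1 k) A) a -> ls_rng 0 i (A:=A) a.
Proof. rewrite /ls_rng; have := ltn_ord (ls_lay A a); arith. Qed.
Definition r3bf (x : ls_car SL3b) : ls_car SR3b := let: exist a H := x in exist _ a (r3b_1 H).
Definition r3bg (x : ls_car SR3b) : ls_car SL3b := let: exist a H := x in exist _ a (r3b_2 H).
Lemma r3bfK : cancel r3bf r3bg.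
Proof. by case=> a H; apply: val_inj. Qed.
Lemma r3bgK : cancel r3bg r3bf.
Proof. by case=> a H; apply: val_inj. Qed.
Lemma r3b_lay x : ls_lay SR3b (r3bf x) = ls_lay SL3b x.
Proof. case: x => a H; apply: val_inj; move: H; rewrite /ls_rng; have := ltn_ord (ls_lay A a); arith. Qed.
Definition r3biso : lsiso SL3b SR3b := LSIso r3bfK r3bgK r3b_lay.

Lemma u3b_1 a : toplayer (i:=i) (A:=A) a -> toplayer (i:=i.+1) (A:=ls_relay (skipmap i.+1 k) A) a.
Proof. rewrite /toplayer; have := ltn_ord (ls_lay A a); arith. Qed.
Lemma u3b_2 a : toplayer (i:=i.+1) (A:=ls_relay (skipmap i.+1 k) A) a -> toplayer (i:=i) (A:=A) a.
Proof. rewrite /toplayer; have := ltn_ord (ls_lay A a); arith. Qed.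
Definition u3bf (x : {s : ls_car A | toplayer (i:=i) s}) :
  {s : ls_car (ls_relay (skipmap i.+1 k) A) | toplayer (i:=i.+1) s} :=
  let: exist a H := x in exist _ a (u3b_1 H).
Definition u3bg (x : {s : ls_car (ls_relay (skipmap i.+1 k) A) | toplayer (i:=i.+1) s}) :
  {s : ls_car A | toplayer (i:=i) s} :=
  let: exist a H := x in exist _ a (u3b_2 H).
Lemma u3bfK : cancel u3bf u3bg.
Proof. by case=> a H; apply: val_inj. Qed.
Lemma u3bgK : cancel u3bg u3bf.
Proof. by case=> a H; apply: val_inj. Qed.
End C3b.

Lemma cond3b i j k : k <= i ->
         natiso (bcompF (Bvs i j.+1 k) (abacus_f i j))
                (bcompF (abacus_f i.+1 j) (Bvs i.+1 j k)).
Proof.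
move=> hk.
exists (fun x => (r3biso hk x.1, mv_iso x.2 (@u3bfK _ _ hk x.1) (@u3bgK _ _ hk x.1))).
move=> x y h; split => [[a H]|[[a H]|p]] //=.
  by apply: val_inj.
by congr inl; apply: val_inj.
Qed.

Section C4.
Variables (i j : nat) (A : lset i) (P : lposet j.+1).
Definition A4 := ls_relay (skipmap i i) A.
Definition SL4 := ls_restr 0 i A4.
Lemma r4 (a : ls_car A) : ls_rng 0 i (A:=A4) a.
Proof. rewrite /ls_rng; have := ltn_ord (ls_lay A a); arith. Qed.
Definition s4f (x : ls_car SL4) : ls_car A := val x.
Definition s4g (a : ls_car A) : ls_car SL4 := exist _ a (r4 a).
Lemma s4fK : cancel s4f s4g.
Proof. by case=> a H; apply: val_inj. Qed.
Lemma s4gK : cancel s4g s4f.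
Proof. by []. Qed.
Lemma s4_lay x : ls_lay A (s4f x) = ls_lay SL4 x.
Proof. case: x => a H; apply: val_inj; have := ltn_ord (ls_lay A a); rewrite /s4f /=; arith. Qed.
Definition s4iso : lsiso SL4 A := LSIso s4fK s4gK s4_lay.

Definition PL4 := lp_relay (@joinmap_mono j 1) (mv_poset A4 P).
Lemma notop4 (a : ls_car A4) : toplayer (i:=i) a -> False.
Proof. rewrite /toplayer; have := ltn_ord (ls_lay A a); arith. Qed.
Definition p4f (x : lp_car PL4) : lp_car P :=
  match x with inl a => False_rect _ (notop4 (valP a)) | inr p => p end.
Definition p4g (p : lp_car P) : lp_car PL4 := inr p.
Lemma p4fK : cancel p4f p4g.
Proof. by case=> [[a H]|p] //; case: (notop4 H). Qed.
Lemma p4gK : cancel p4g p4f.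
Proof. by []. Qed.
Lemma p4_le x y : lp_le P (p4f x) (p4f y) = lp_le PL4 x y.
Proof.
case: x => [[a H]|p]; first by case: (notop4 H).
by case: y => [[a H]|q] //; case: (notop4 H).
Qed.
Lemma p4_lay x : lp_lay P (p4f x) = lp_lay PL4 x.
Proof.
case: x => [[a H]|p]; first by case: (notop4 H).
apply: val_inj; rewrite /= /bump /=; have := ltn_ord (lp_lay P p); arith.
Qed.
Definition p4iso : lpiso PL4 P := LPIso p4fK p4gK p4_le p4_lay.
End C4.

Lemma cond4 i j : natiso (bcompF (Bhf i j 0) (bcompF (abacus_f i j) (Bvs i j i)))
                          (bidF i j.+1).
Proof.
exists (fun x => (s4iso x.1, p4iso x.1 x.2)).
move=> x y h; split => [[a H]|[[a H]|p]] //=.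
by case: (notop4 H).
Qed.

Lemma I0_False (o : 'I_0) : False. Proof. by case: o. Qed.

Section Empty.
Variables (A B : lset 0) (P Q : lposet 0).
Definition e0f (x : ls_car A) : ls_car B := False_rect _ (I0_False (ls_lay A x)).
Definition e0g (x : ls_car B) : ls_car A := False_rect _ (I0_False (ls_lay B x)).
Lemma e0fK : cancel e0f e0g. Proof. by move=> x; case: (I0_False (ls_lay A x)). Qed.
Lemma e0gK : cancel e0g e0f. Proof. by move=> x; case: (I0_False (ls_lay B x)). Qed.
Lemma e0_lay x : ls_lay B (e0f x) = ls_lay A x. Proof. by case: (I0_False (ls_lay A x)). Qed.
Definition ls_empty_iso : lsiso A B := LSIso e0fK e0gK e0_lay.
Definition pe0f (x : lp_car P) : lp_car Q := False_rect _ (I0_False (lp_lay P x)).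
Definition pe0g (x : lp_car Q) : lp_car P := False_rect _ (I0_False (lp_lay Q x)).
Lemma pe0fK : cancel pe0f pe0g. Proof. by move=> x; case: (I0_False (lp_lay P x)). Qed.
Lemma pe0gK : cancel pe0g pe0f. Proof. by move=> x; case: (I0_False (lp_lay Q x)). Qed.
Lemma pe0_le x y : lp_le Q (pe0f x) (pe0f y) = lp_le P x y.
Proof. by case: (I0_False (lp_lay P x)). Qed.
Lemma pe0_lay x : lp_lay Q (pe0f x) = lp_lay P x. Proof. by case: (I0_False (lp_lay P x)). Qed.
Definition lp_empty_iso : lpiso P Q := LPIso pe0fK pe0gK pe0_le pe0_lay.
End Empty.

Section TopP.
Variable i : nat.
Section Obj.
Variable A : lset i.+1.
Definition tp_T : finType := {s : ls_car A | toplayer s}.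
Definition tp_le : rel tp_T := fun x y => x == y.
Lemma tp_refl : reflexive tp_le. Proof. by move=> x; rewrite /tp_le eqxx. Qed.
Lemma tp_anti : antisymmetric tp_le. Proof. by move=> x y /andP[/eqP]. Qed.
Lemma tp_trans : transitive tp_le. Proof. by move=> x y z /eqP-> /eqP->; rewrite /tp_le eqxx. Qed.
Definition tp_lay (x : tp_T) : 'I_1 := ord0.
Lemma tp_mono x y : tp_le x y -> tp_lay x <= tp_lay y. Proof. by []. Qed.
Definition topP : lposet 1 := LPoset tp_refl tp_anti tp_trans tp_mono.
End Obj.
Section Hom.
Variables (A B : lset i.+1) (h : lsiso A B).
Definition tpf (x : lp_car (topP A)) : lp_car (topP B) := exist _ (si_f h (val x)) (top_f h (valP x)).
Definition tpg (x : lp_car (topP B)) : lp_car (topP A) := exist _ (si_g h (val x)) (top_g h (valP x)).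
Lemma tpfK : cancel tpf tpg. Proof. by move=> x; apply: val_inj; rewrite /= si_fK. Qed.
Lemma tpgK : cancel tpg tpf. Proof. by move=> x; apply: val_inj; rewrite /= si_gK. Qed.
Lemma tpf_le x y : lp_le (topP B) (tpf x) (tpf y) = lp_le (topP A) x y.
Proof. by rewrite /= /tp_le (can_eq tpfK). Qed.
Lemma tpf_lay x : lp_lay (topP B) (tpf x) = lp_lay (topP A) x. Proof. by []. Qed.
Definition tp_hom : lpiso (topP A) (topP B) := LPIso tpfK tpgK tpf_le tpf_lay.
End Hom.
End TopP.

Definition fa i : bfun i.+1 0 i 1 :=
  @BFun i.+1 0 i 1 (fun x => (ls_restr 0 i x.1, topP x.1))
    (fun x y h => (ls_restr_hom 0 i h.1, tp_hom h.1)).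

Lemma fa_functor i : is_functor (fa i).
Proof.
split.
- by move=> [A P]; split => [s|s] //=; apply: val_inj.
- by move=> x y z g h; split => [s|s] //=; apply: val_inj.
- move=> x y h h' [H1 H2]; split => [s|s] /=; by apply: val_inj; rewrite /= H1.
Qed.

Lemma bid_functor i n : is_functor (bidF i n).
Proof. by split. Qed.

Section CA.
Variables (i : nat) (A : lset i.+1) (Q : lposet 1).
Definition RA := lp_restr 0 1 (mv_poset A Q).
Lemma ra_in (s : tp_T A) : @lp_rng _ 0 1 (mv_poset A Q) (inl s). Proof. by []. Qed.
Lemma ra_notr q : @lp_rng _ 0 1 (mv_poset A Q) (inr q) -> False.
Proof. by rewrite /lp_rng /= /bump /=; lia. Qed.
Definition af (s : lp_car (topP A)) : lp_car RA := exist _ (inl s) (ra_in s).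
Definition ag (x : lp_car RA) : lp_car (topP A) :=
  let: exist v H := x in
  (match v return @lp_rng _ 0 1 (mv_poset A Q) v -> lp_car (topP A) with
   | inl a => fun _ => a
   | inr q => fun H => False_rect _ (ra_notr H) end) H.
Lemma afK : cancel af ag. Proof. by []. Qed.
Lemma agK : cancel ag af.
Proof. by case=> [[a|q] H]; [apply: val_inj | case: (ra_notr H)]. Qed.
Lemma af_le x y : lp_le RA (af x) (af y) = lp_le (topP A) x y. Proof. by []. Qed.
Lemma af_lay x : lp_lay RA (af x) = lp_lay (topP A) x. Proof. by apply: val_inj. Qed.
Definition aiso : lpiso (topP A) RA := LPIso afK agK af_le af_lay.
End CA.

Lemma condA i : natiso (bcompF (fa i) (Bu i.+1)) (bcompF (Bhf i 0 1) (abacus_f i 0)).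
Proof.
exists (fun x => (lsid _, aiso x.1 x.2)).
move=> x y h; split => [s|s] //=.
by apply: val_inj.
Qed.

Lemma Xface_top n : Xface n n.+1 = ls_restrF n.+1 0 n.
Proof. by case: n => //= n; rewrite eqxx. Qed.

Lemma condB i : natiso (bcompF (Bu i) (fa i)) (Bvf_aug i i.+1).
Proof.
rewrite /Bvf_aug Xface_top.
exists (fun x => (lsid _, lp_empty_iso _ _)).
move=> x y h; split => [s|s] //=.
by case: (I0_False (lp_lay _ s)).
Qed.

Section CC.
Variables (j : nat) (A : lset 1) (P : lposet j.+1).
Definition RC := lp_restr 1 j.+1 (mv_poset A P).
Lemma rc_in p : @lp_rng _ 1 j.+1 (mv_poset A P) (inr p).
Proof. by rewrite /lp_rng /= /bump /=; have := ltn_ord (lp_lay P p); lia. Qed.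
Lemma rc_notl a : @lp_rng _ 1 j.+1 (mv_poset A P) (inl a) -> False.
Proof. by []. Qed.
Definition cf (p : lp_car P) : lp_car RC := exist _ (inr p) (rc_in p).
Definition cg (x : lp_car RC) : lp_car P :=
  let: exist v H := x in
  (match v return @lp_rng _ 1 j.+1 (mv_poset A P) v -> lp_car P with
   | inl a => fun H => False_rect _ (rc_notl H)
   | inr q => fun _ => q end) H.
Lemma cfK : cancel cf cg. Proof. by []. Qed.
Lemma cgK : cancel cg cf.
Proof. by case=> [[a|q] H]; [case: (rc_notl H) | apply: val_inj]. Qed.
Lemma cf_le x y : lp_le RC (cf x) (cf y) = lp_le P x y. Proof. by []. Qed.
Lemma cf_lay x : lp_lay RC (cf x) = lp_lay P x.
Proof. by apply: val_inj; rewrite /= /bump /= add1n subn1. Qed.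
Definition ciso : lpiso P RC := LPIso cfK cgK cf_le cf_lay.
End CC.

Lemma condC j : natiso (bcompF (bidF 0 j.+1) (Bvf 0 j 0)) (bcompF (Bv j.+1) (abacus_f 0 j)).
Proof.
exists (fun x => (ls_empty_iso _ _, ciso x.1 x.2)).
move=> x y h; split => [s|s] //=.
  by case: (I0_False (ls_lay _ s)).
by apply: val_inj.
Qed.

Lemma condD j : natiso (bcompF (Bhf_aug j 0) (bidF 0 j.+1)) (Bv j).
Proof. by exists (fun x => bid _); move=> x y h; split. Qed.

Theorem lemma2p12 : is_augmented_abacus_map abacus_f.
Proof.
split.
  split.
  - exact: abacus_functor.
  - split; [exact: cond2a | exact: cond2b].
  - split; [exact: cond3a | exact: cond3b].
  - exact: cond4.
exists fa, (fun j => bidF 0 j.+1); split.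
- by split => [i|j]; [exact: fa_functor | exact: bid_functor].
- exact: condA.
- exact: condB.
- exact: condC.
- exact: condD.
Qed.
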